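(* Let $n_x\ge1$, $t\ge 0$, and let $\bm{M}_0,\dots,\bm{M}_t$ and $\widehat{\bm{Q}}$ be $n_x\times n_x$ symmetric positive definite matrices such that the ellipsoid $\widehat{\mathcal{E}}=\mathcal{E}(\bm{0},\widehat{\bm{Q}})$ contains the Minkowski sum $\mathcal{X}=\mathcal{E}(\bm{0},\bm{M}_0)+\cdots+\mathcal{E}(\bm{0},\bm{M}_t)$. Let $\delta_{\mathrm{H}}$ be the Hausdorff distance between $\mathcal{X}$ and $\widehat{\mathcal{E}}$, which equals $$\delta_{\mathrm{H}}=\sup_{\bm{s}\in\mathcal{S}^{n_x-1}}\left(\big\|\widehat{\bm{Q}}^{1/2}\bm{s}\big\|_2-\sum_{k=0}^{t}\big\|\bm{M}_k^{1/2}\bm{s}\big\|_2\right).$$ Then $$\delta_{\mathrm{H}}\leq\Big\|\widehat{\bm{Q}}^{1/2}-\sum_{k=0}^{t}\bm{M}_k^{1/2}\Big\|_2,$$ where $\|\cdot\|_2$ on matrices denotes the spectral (operator 2-) norm.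
   Context: $\mathcal{E}(\bm{0},\bm{Q})=\{\bm{x}\in\mathbb{R}^{n_x}:\bm{x}^\top\bm{Q}^{-1}\bm{x}\le1\}$ for symmetric positive definite $\bm{Q}$. $\mathcal{S}^{n_x-1}$ is the Euclidean unit sphere in $\mathbb{R}^{n_x}$, and $\bm{A}^{1/2}$ is the symmetric positive definite square root. The Hausdorff distance is $\max\{\sup_{\bm{x}\in\mathcal{X}}\inf_{\bm{y}\in\widehat{\mathcal{E}}}\|\bm{x}-\bm{y}\|_2,\ \sup_{\bm{y}\in\widehat{\mathcal{E}}}\inf_{\bm{x}\in\mathcal{X}}\|\bm{x}-\bm{y}\|_2\}$. In the paper, $\mathcal{X}$ is the reach set at time $t$ of the linear system $\bm{x}(t+1)=\bm{F}\bm{x}(t)+\bm{G}\bm{u}(t)$ with ellipsoidal initial-condition and control sets centered at the origin, with $\bm{M}_t=\bm{F}^t\bm{Q}_0(\bm{F}^\top)^t$ and $\bm{M}_k=\bm{F}^{t-k-1}\bm{G}\bm{U}\bm{G}^\top(\bm{F}^\top)^{t-k-1}$ for $k<t$, and $\widehat{\bm{Q}}$ is the shape matrix of an outer ellipsoidal approximation of it. *)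

(* Defs.v *)
From HB Require Import structures.
From mathcomp Require Import all_boot all_order all_algebra.
From mathcomp Require Import classical_sets reals.
Set Implicit Arguments. Unset Strict Implicit. Unset Printing Implicit Defensive.
Import Order.TTheory GRing.Theory Num.Theory.
Local Open Scope ring_scope.
Local Open Scope classical_set_scope.

Section Defs.
Variable R : realType.

Definition vnorm (n : nat) (x : 'cV[R]_n) : R := Num.sqrt (\sum_i x i 0 ^+ 2).

Definition qform (n : nat) (A : 'M[R]_n) (x : 'cV[R]_n) : R := (x^T *m A *m x) 0 0.

Definition spd (n : nat) (A : 'M[R]_n) : Prop :=
  A^T = A /\ forall x : 'cV[R]_n, x != 0 -> 0 < qform A x.

Definition is_sqrtm (n : nat) (A B : 'M[R]_n) : Prop := spd B /\ B *m B = A.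

Definition ellipsoid (n : nat) (Q : 'M[R]_n) : set 'cV[R]_n :=
  [set x | qform (invmx Q) x <= 1].

Definition minkowski_ellipsoids (n t : nat) (M : 'I_t.+1 -> 'M[R]_n) : set 'cV[R]_n :=
  [set x | exists y : 'I_t.+1 -> 'cV[R]_n,
     (forall k, ellipsoid (M k) (y k)) /\ x = \sum_k y k].

Definition spec_norm (n : nat) (A : 'M[R]_n) : R :=
  sup [set vnorm (A *m x) | x in [set x : 'cV[R]_n | vnorm x = 1]].

Definition dist_pt_set (n : nat) (x : 'cV[R]_n) (B : set 'cV[R]_n) : R :=
  inf [set vnorm (x - y) | y in B].

Definition hausdorff (n : nat) (A B : set 'cV[R]_n) : R :=
  Num.max (sup [set dist_pt_set x B | x in A]) (sup [set dist_pt_set y A | y in B]).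

End Defs.

(* Main.v *)
Require Import Defs.
From HB Require Import structures.
From mathcomp Require Import all_boot all_order all_algebra.
From mathcomp Require Import classical_sets reals.
From mathcomp Require Import lra.
Import Order.TTheory GRing.Theory Num.Theory.
Local Open Scope ring_scope.
Local Open Scope classical_set_scope.

Section Aux.
Context {R : realType} {n : nat}.

Lemma sumsq_ge0 (x : 'cV[R]_n) : 0 <= \sum_i x i 0 ^+ 2.
Proof. by apply: sumr_ge0 => i _; rewrite sqr_ge0. Qed.

Lemma vnorm_ge0 (x : 'cV[R]_n) : 0 <= vnorm x.
Proof. exact: sqrtr_ge0. Qed.

Lemma trmulE (x : 'cV[R]_n) : (x^T *m x) 0 0 = \sum_i x i 0 ^+ 2.
Proof. by rewrite mxE; apply: eq_bigr => i _; rewrite mxE expr2. Qed.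

Lemma spd_unit (A : 'M[R]_n) : spd A -> A \in unitmx.
Proof.
case=> sym pos; rewrite unitmxE unitfE; apply/negP => /det0P [v v0 vA].
have : v^T != 0 by rewrite trmx_eq0.
move/pos; rewrite /qform trmxK vA mul0mx mxE ltxx //.
Qed.

Lemma qform_sq (P : 'M[R]_n) (u : 'cV[R]_n) : P^T = P -> P \in unitmx ->
  qform (invmx (P *m P)) (P *m u) = (u^T *m u) 0 0.
Proof.
move=> sym uP.
have PP : P *m P \in unitmx by rewrite unitmx_mul uP.
have -> : invmx (P *m P) = invmx P *m invmx P.
  have e1 : (P *m P) *m (invmx P *m invmx P) = 1%:M.
    by rewrite mulmxA -(mulmxA P P) mulmxV // mulmx1 mulmxV.
  by rewrite -[LHS]mulmx1 -e1 mulmxA mulVmx // mul1mx.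
rewrite /qform trmx_mul sym.
rewrite !mulmxA -(mulmxA _ P (invmx P)) mulmxV // mulmx1.
by rewrite -(mulmxA _ (invmx P) P) mulVmx // mulmx1.
Qed.

Lemma sq_le_sum (I : finType) (f : I -> R) :
  \sum_i f i ^+ 2 <= (\sum_i `|f i|) ^+ 2.
Proof.
have : \sum_i f i ^+ 2 <= (\sum_i `|f i|) ^+ 2 /\ 0 <= \sum_i `|f i|.
  apply: (big_rec2 (fun a b => a <= b ^+ 2 /\ 0 <= b)); first by rewrite expr0n.
  move=> i a b _ [h1 h2]; split; last by rewrite addr_ge0.
  have h3 : 0 <= `|f i| by [].
  have h4 : f i ^+ 2 = `|f i| ^+ 2 by rewrite real_normK ?num_real.
  rewrite h4; nra.
by case.
Qed.

Lemma vnorm_le_l1 (x : 'cV[R]_n) : vnorm x <= \sum_i `|x i 0|.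
Proof.
rewrite /vnorm -(ger0_norm (sumr_ge0 _ (fun i _ => normr_ge0 (x i 0)))).
rewrite -sqrtr_sqr ler_sqrt ?sqr_ge0 //; exact: sq_le_sum.
Qed.

Lemma vnorm1_coord (x : 'cV[R]_n) j : vnorm x = 1 -> `|x j 0| <= 1.
Proof.
move=> h.
have hs : \sum_i x i 0 ^+ 2 = 1.
  by rewrite -(sqr_sqrtr (sumsq_ge0 x)) -/(vnorm x) h expr1n.
have : x j 0 ^+ 2 <= 1.
  rewrite -hs (bigD1 j) //= lerDl; apply: sumr_ge0 => i _; exact: sqr_ge0.
rewrite -real_normK ?num_real // => h2.
have h3 : 0 <= `|x j 0| by [].
nra.
Qed.

Lemma spec_ub (A : 'M[R]_n) :
  has_ubound [set vnorm (A *m x) | x in [set x : 'cV[R]_n | vnorm x = 1]].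
Proof.
exists (\sum_i \sum_j `|A i j|) => _ [x hx <-].
apply: le_trans (vnorm_le_l1 _) _; apply: ler_sum => i _.
rewrite mxE; apply: le_trans (ler_norm_sum _ _ _) _; apply: ler_sum => j _.
rewrite normrM -[leRHS]mulr1; apply: ler_wpM2l => //; exact: vnorm1_coord.
Qed.

Lemma vnormZ (c : R) (x : 'cV[R]_n) : vnorm (c *: x) = `|c| * vnorm x.
Proof.
rewrite /vnorm -sqrtr_sqr -sqrtrM ?sqr_ge0 // mulr_sumr.
by congr Num.sqrt; apply: eq_bigr => i _; rewrite mxE exprMn.
Qed.

Lemma vnorm_eq0 (x : 'cV[R]_n) : vnorm x = 0 -> x = 0.
Proof.
move=> /eqP; rewrite /vnorm sqrtr_eq0 => h.
have h0 : \sum_i x i 0 ^+ 2 = 0 by apply/eqP; rewrite eq_le h sumsq_ge0.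
apply/matrixP => i j; rewrite ord1 mxE.
have := psumr_eq0P (fun i _ => sqr_ge0 (x i 0)) h0 (i:=i) isT.
by move/eqP; rewrite sqrf_eq0 => /eqP.
Qed.

Lemma spec_ge0 (A : 'M[R]_n) : (0 < n)%N -> 0 <= spec_norm A.
Proof.
move=> hn.
pose e : 'cV[R]_n := \col_i (i == Ordinal hn)%:R.
have he : vnorm e = 1.
  rewrite /vnorm (bigD1 (Ordinal hn)) //= big1 ?mxE ?eqxx ?addr0 ?expr1n ?sqrtr1 //.
  by move=> i /negPf hi; rewrite mxE hi expr0n.
apply: le_trans (vnorm_ge0 (A *m e)) _.
apply: ub_le_sup; first exact: spec_ub.
by exists e.
Qed.

Lemma spec_bound (A : 'M[R]_n) (u : 'cV[R]_n) : (0 < n)%N ->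
  vnorm (A *m u) <= spec_norm A * vnorm u.
Proof.
move=> hn.
have [h0|hpos] := eqVneq (vnorm u) 0.
  rewrite h0 mulr0 (@vnorm_eq0 u h0) mulmx0 /vnorm big1 ?sqrtr0 // => i _.
  by rewrite mxE expr0n.
have cp : 0 < vnorm u by rewrite lt_def hpos vnorm_ge0.
pose w := (vnorm u)^-1 *: u.
have hw : vnorm w = 1 by rewrite vnormZ ger0_norm ?invr_ge0 ?vnorm_ge0 // mulVf.
have : vnorm (A *m w) <= spec_norm A.
  by apply: ub_le_sup; [exact: spec_ub | exists w].
rewrite /w -scalemxAr vnormZ ger0_norm ?invr_ge0 ?vnorm_ge0 //.
by rewrite ler_pdivrMl // mulrC.
Qed.

End Aux.

Theorem proposition1 (R : realType) (n t : nat) (hn : (0 < n)%N)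
  (M : 'I_t.+1 -> 'M[R]_n) (Qh : 'M[R]_n)
  (sqM : 'I_t.+1 -> 'M[R]_n) (sqQh : 'M[R]_n) :
  (forall k, spd (M k)) -> spd Qh ->
  (forall k, is_sqrtm (M k) (sqM k)) -> is_sqrtm Qh sqQh ->
  minkowski_ellipsoids M `<=` ellipsoid Qh ->
  hausdorff (minkowski_ellipsoids M) (ellipsoid Qh)
    <= spec_norm (sqQh - \sum_k sqM k).
Proof.
move=> spdM spdQ sqrtM [[symS posS] SS] sub.
have uS : sqQh \in unitmx by apply: spd_unit.
have uM k : sqM k \in unitmx by case: (sqrtM k) => h _; exact: spd_unit.
have symM k : (sqM k)^T = sqM k by case: (sqrtM k) => [[]].
set A := sqQh - \sum_k sqM k.
have s0 := spec_ge0 A hn.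
have ell0 : ellipsoid Qh 0 by rewrite /ellipsoid /= /qform mulmx0 mxE ler01.
have X0 : minkowski_ellipsoids M 0.
  exists (fun=> 0); split; last by rewrite big1.
  by move=> k; rewrite /ellipsoid /= /qform mulmx0 mxE ler01.
rewrite /hausdorff ge_max; apply/andP; split.
- apply: ge_sup; first by exists (dist_pt_set 0 (ellipsoid Qh)); exists 0.
  move=> _ [x hx <-]; apply: le_trans s0.
  have -> : 0 = vnorm (x - x).
    by rewrite subrr /vnorm big1 ?sqrtr0 // => i _; rewrite mxE expr0n.
  apply: ge_inf; first by exists 0 => _ [y _ <-]; exact: vnorm_ge0.
  by exists x; [exact: sub|].
- apply: ge_sup; first by exists (dist_pt_set 0 (minkowski_ellipsoids M)); exists 0.
  move=> _ [y hy <-].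
  pose u := invmx sqQh *m y.
  have yE : y = sqQh *m u by rewrite /u mulKVmx.
  have hu : (u^T *m u) 0 0 <= 1.
    by move: hy; rewrite /ellipsoid /= -SS {1}yE qform_sq.
  have vu : vnorm u <= 1 by rewrite /vnorm -sqrtr1 ler_sqrt ?ler01 // -trmulE.
  apply: (@le_trans _ _ (vnorm (y - \sum_k sqM k *m u))).
    rewrite /dist_pt_set; apply: ge_inf; first by exists 0 => _ [z _ <-]; exact: vnorm_ge0.
    exists (\sum_k sqM k *m u) => //.
    exists (fun k => sqM k *m u); split => // k.
    by rewrite /ellipsoid /=; case: (sqrtM k) => _ <-; rewrite qform_sq.
  have -> : y - \sum_k sqM k *m u = A *m u by rewrite /A mulmxBl mulmx_suml -yE.
  apply: le_trans (spec_bound A u hn) _.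
  by rewrite -[leRHS]mulr1; apply: ler_wpM2l.
Qed.
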